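(* Let $n\geq 1$ and $k\geq 2$ be integers with $f_k\leq n\leq f_{k+1}$, and let $A^{(n)}=\{1,2,\dots,n\}$. The vertex $v$ of the Fibonacci-sum set-graph $G^F_{A^{(n)}}$ corresponding to the full set $A^{(n)}$ has the maximum number of loops among all vertices, and \[ l(v)=\begin{cases} n+\frac{f_k+1}{2}-\frac{\lfloor 4(k+1)/3\rfloor}{2}, & \text{if } n\leq \frac{f_{k+2}}{2},\\[2pt] 2n+\frac{f_k+1}{2}-\frac{\lfloor 4(k+1)/3\rfloor}{2}-\left\lceil \frac{f_{k+2}-1}{2}\right\rceil, & \text{if } n>\frac{f_{k+2}}{2}.\end{cases} \]
   Context: Let $\mathcal{F}=\{f_m\}_{m\ge 0}$ be the Fibonacci numbers, $f_0=0$, $f_1=1$, $f_m=f_{m-1}+f_{m-2}$. The Fibonacci-sum set-graph $G^F_{A^{(n)}}$ is the multigraph (loops and multiple edges allowed) whose vertices are in bijection with the nonempty subsets of $A^{(n)}=\{1,\dots,n\}$; between the vertices corresponding to distinct subsets $S,T$ there is one edge for each pair $(i',j')$ with $i'\in S$, $j'\in T$, $i'\neq j'$ and $i'+j'\in\mathcal{F}$, and at the vertex corresponding to $S$ there is one loop for each pair of distinct elements $i',j'\in S$ with $i'+j'\in\mathcal{F}$. For a vertex $v$, $l(v)$ denotes its number of loops. *)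

(* Defs.v *)
From mathcomp Require Import all_boot all_order all_algebra.
Set Implicit Arguments. Unset Strict Implicit. Unset Printing Implicit Defensive.

Fixpoint fib (m : nat) : nat :=
  match m with
  | 0 => 0
  | 1 => 1
  | (p.+1 as q).+1 => fib q + fib p
  end.

(* m is a Fibonacci number.  Since fib i >= i - 1, any index i with
   fib i = m satisfies i < m.+2, so the bounded search is exact. *)
Definition is_fib (m : nat) : bool := [exists i : 'I_(m.+2), fib i == m].

(* The ground set A^(n) = {1,...,n}, seen inside 'I_(n.+1) = {0,...,n}. *)
Definition Aset (n : nat) : {set 'I_n.+1} := [set i : 'I_n.+1 | 0 < i].

(* Number of loops at the vertex corresponding to S: number of unordered
   pairs {i,j} of distinct elements of S with i + j Fibonacci
   (counted as ordered pairs with i < j). *)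
Definition loops (n : nat) (S : {set 'I_n.+1}) : nat :=
  #|[set p : 'I_n.+1 * 'I_n.+1 |
      [&& p.1 \in S, p.2 \in S, (p.1 < p.2)%N & is_fib (p.1 + p.2)]]|.

(* Main.v *)
Require Import Defs.
From mathcomp Require Import all_boot all_order all_algebra zify lra.
Import Order.TTheory GRing.Theory Num.Theory.

Lemma fibSS j : fib j.+2 = fib j.+1 + fib j.
Proof. by []. Qed.

Lemma fib_mono i j : i <= j -> fib i <= fib j.
Proof.
move=> /subnK <-; elim: (j - i) => [|d IH] //.
rewrite addSn; case: (d + i) IH => [|m] IH //.
 by apply: leq_trans IH _. by rewrite fibSS; lia.
Qed.

Lemma fib_pos j : 0 < j -> 0 < fib j.
Proof. by case: j => // j _; apply: (@leq_trans (fib 1)) => //; apply: fib_mono. Qed.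

Lemma fib_ge j : j <= (fib j).+1.
Proof.
suff: j <= (fib j).+1 /\ j.+1 <= (fib j.+1).+1 by case.
elim: j => [|j [H1 H2]]; split => //; rewrite fibSS.
case: j H1 H2 => [|j] H1 H2 //; have := @fib_pos j.+1 isT; lia.
Qed.

Lemma fib_ltS j : 2 <= j -> fib j < fib j.+1.
Proof. case: j => [|[|j]] // _; rewrite (fibSS j.+1); have := @fib_pos j.+1 isT; lia. Qed.

Lemma is_fibP x : reflect (exists j, fib j = x) (is_fib x).
Proof.
apply: (iffP existsP) => [[i /eqP <-]|[j Hj]]; first by exists i.
have Hlt : j < x.+2 by rewrite -Hj ltnS fib_ge.
by exists (Ordinal Hlt); rewrite /= Hj.
Qed.

Lemma fib_odd j : odd (fib j) = (j %% 3 != 0).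
Proof.
suff: odd (fib j) = (j %% 3 != 0) /\ odd (fib j.+1) = (j.+1 %% 3 != 0) by case.
elim: j => [|j [H1 H2]]; split => //.
rewrite fibSS oddD H1 H2 -[j.+2]addn2 -[j.+1]addn1 -modnDml -(modnDml j 2).
have := ltn_pmod j (isT : 0 < 3). by case: (j %% 3) => [|[|[|]]].
Qed.

Definition c m := \sum_(0 <= i < m) ((0 < i) && is_fib (i + m)).

Lemma sum_eq1 a b p : a <= b -> \sum_(a <= i < b) (i == p) = (a <= p < b).
Proof.
move=> /subnK <-; elim: (b - a) => [|d IH]; first by rewrite add0n big_geq //; lia.
rewrite addSn big_nat_recr /=; last by lia.
rewrite IH; case: eqP => [<-|/eqP ne]; first by rewrite ltnn andbF leq_addl ltnS leqnn.
by rewrite addn0 ltnS (leq_eqVlt p) eq_sym (negbTE ne).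
Qed.

Lemma c_val k m : 2 <= k -> fib k.+1 <= m < fib k.+2 -> c m = 1 + (fib k.+3 < m.*2).
Proof.
move=> Hk /andP[H1 H2].
have Hlt := fib_ltS _ Hk.
have E2 : fib k.+2 = fib k.+1 + fib k by [].
have E3 : fib k.+3 = fib k.+2 + fib k.+1 by [].
set a := fib k.+2 - m; set b := fib k.+3 - m.
have Hs : forall i, 0 <= i < m -> ((0 < i) && is_fib (i + m) : nat) = (i == a) + (i == b).
  move=> i /andP[_ Him].
  case: (posnP i) => [->|Hi] /=; first by rewrite /a /b; lia.
  case Ha: (i == a).
    move/eqP: Ha => Ha.
    have -> : is_fib (i + m) by apply/is_fibP; exists k.+2; rewrite Ha /a; lia.
    case: eqP => [|_] //; rewrite /a /b in Ha *; lia.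
  case Hb: (i == b).
    move/eqP: Hb => Hb.
    by have -> : is_fib (i + m) by apply/is_fibP; exists k.+3; rewrite Hb /b; lia.
  case: is_fibP => // [[j Hj]]; exfalso.
  move/eqP: Ha; move/eqP: Hb; rewrite /a /b => Ha Hb.
  case: (leqP j k.+1) => Hj1.
    have := fib_mono _ _ Hj1; lia.
  case: (leqP j k.+3) => Hj3.
    have : j = k.+2 \/ j = k.+3 by lia.
    case => ?; subst j; lia.
  have := fib_mono _ _ Hj3; have : fib k.+4 = fib k.+3 + fib k.+2 by []; lia.
rewrite /c (eq_big_nat _ _ Hs) big_split !sum_eq1 //.
rewrite /a /b.
have -> : (0 <= fib k.+2 - m < m) = true by apply/andP; split; lia.
have -> : (0 <= fib k.+3 - m < m) = (fib k.+3 < m.*2) by apply/idP/idP; [move/andP=> [_]|move=> ?; apply/andP; split]; lia.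
by [].
Qed.

Fixpoint g n := match n with 0 => 0 | m.+1 => g m + c m.+1 end.
Definition q k := (4 * k.+1) %/ 3.

Lemma fib_half j : (j %% 3 = 0 /\ fib j = (fib j)./2.*2) \/
                   (j %% 3 <> 0 /\ fib j = ((fib j)./2.*2).+1).
Proof.
have := odd_double_half (fib j); rewrite fib_odd.
case: eqP => H; [left|right]; split => //; lia.
Qed.

Lemma gS m : g m.+1 = g m + c m.+1.
Proof. by []. Qed.

Lemma g1 : g 1 = 0.
Proof. by rewrite /= /c big_nat1. Qed.

Lemma g_val k : 2 <= k -> forall n, fib k <= n < fib k.+1 ->
  (g n).*2 + q k = n.*2 + fib k + 1 + (n - (fib k.+2)./2).*2.
Proof.
elim: k => [|k IH] //; case: (ltnP k 2) => Hk2 Hk.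
  have -> : k = 1 by lia.
  move=> n; rewrite /= => Hn; have -> : n = 1 by lia.
  by rewrite g1.
move=> {Hk} n /andP[Hn1 Hn2].
have Hlt := fib_ltS _ Hk2.
have Hk0 : 0 < fib k by apply: fib_pos; lia.
have E2 : fib k.+2 = fib k.+1 + fib k by [].
have E3 : fib k.+3 = fib k.+2 + fib k.+1 by [].
have Hf2 := fib_half k.+2; have Hf3 := fib_half k.+3.
rewrite -(subnK Hn1) in Hn2 *; move: (n - fib k.+1) Hn2 => d0 Hn2; clear Hn1; elim: d0 Hn2 => [|d IHd] Hd.
  rewrite add0n.
  have Hpos : 0 < fib k.+1 by lia.
  rewrite -{1}(prednK Hpos) gS (prednK Hpos).
  rewrite (c_val k (fib k.+1)) //; last by apply/andP; split; lia.
  have Hr : fib k <= (fib k.+1).-1 < fib k.+1 by apply/andP; split; lia.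
  have HI := IH Hk2 _ Hr.
  have -> : (fib k.+3 < (fib k.+1).*2) = false by apply/negbTE; rewrite -leqNgt; lia.
  move: HI Hf2 Hf3; rewrite /q; lia.
rewrite addSn gS.
rewrite (c_val k (d + fib k.+1).+1) //; last by apply/andP; split; lia.
have := IHd (ltnW Hd).
case: (ltnP (fib k.+3) (d + fib k.+1).+1.*2); move: Hf2 Hf3; rewrite /q; lia.
Qed.

Definition F i j : nat := (0 < i) && is_fib (i + j).

Lemma g_sum n : g n = \sum_(0 <= j < n.+1) \sum_(0 <= i < j) F i j.
Proof.
elim: n => [|n IH]; first by rewrite big_nat1 big_geq.
by rewrite gS big_nat_recr //= -IH.
Qed.

Lemma loops_g n : loops (Aset n) = g n.
Proof.
have E : loops (Aset n) = \sum_(i < n.+1) \sum_(j < n.+1)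
    (((0 < i) && (0 < j) && (i < j) && is_fib (i + j)) : nat).
  rewrite pair_bigA /= /loops -sum1_card big_mkcond /=.
  apply: eq_bigr => p _; rewrite !inE.
  by rewrite -!andbA; case: (_ && _).
rewrite E exchange_big /= g_sum [RHS]big_mkord; apply: eq_bigr => j _.
rewrite -(big_mkord xpredT (fun i => (((0 < i) && (0 < j) && (i < j) && is_fib (i + j)) : nat))).
rewrite (big_cat_nat (leq0n j)) /=; last by rewrite ltnW.
rewrite [X in _ + X]big_nat_cond [X in _ + X]big1 ?addn0; last first.
  by move=> i /andP[/andP[Hji _] _]; rewrite (ltnNge i j) Hji !andbF.
apply: eq_big_nat => i /andP[_ Hij].
by rewrite /F Hij (leq_ltn_trans (leq0n i) Hij) !andbT.
Qed.

Theorem theorem2p5 (n k : nat) :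
  (1 <= n)%N -> (2 <= k)%N -> (fib k <= n)%N -> (n < fib k.+1)%N ->
  (forall S : {set 'I_n.+1}, S \subset Aset n -> S != set0 ->
     (loops S <= loops (Aset n))%N) /\
  ((loops (Aset n))%:R : rat) =
    (if (n.*2 <= fib k.+2)%N then
       n%:R + (fib k + 1)%:R / 2 - ((4 * k.+1) %/ 3)%:R / 2
     else
       (n.*2)%:R + (fib k + 1)%:R / 2 - ((4 * k.+1) %/ 3)%:R / 2
       - (Num.ceil (((fib k.+2)%:R - 1) / 2 : rat))%:~R)%R.
Proof.
move=> Hn1 Hk Hkn Hnk; split.
  move=> S HS _; rewrite /loops; apply: subset_leq_card; apply/subsetP => p.
  rewrite !inE => /and4P[H1 H2 H3 H4].
  have := subsetP HS _ H1; have := subsetP HS _ H2; rewrite !inE => -> ->.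
  by rewrite H3 H4.
rewrite loops_g.
have HG := g_val k Hk n (introT andP (conj Hkn Hnk)).
move: HG; rewrite /q.
set G := g n; set h := (fib k.+2)./2; set Q := (4 * k.+1) %/ 3.
have Hf := fib_half k.+2; rewrite -/h in Hf.
have D : forall x, ((x.*2)%:R = 2 * x%:R :> rat)%R.
  by move=> x; rewrite -muln2 natrM mulrC.
case: ifP => Hc.
  have -> : (n - h = 0)%N by lia.
  move/(congr1 (fun x => x%:R : rat)); rewrite !natrD !D.
  move=> HE. lra.
have -> : Num.ceil (((fib k.+2)%:R - 1) / 2 : rat) = Posz h.
  apply: ceil_def; rewrite intrB.
  change ((Posz h)%:~R : rat) with (h%:R : rat).
  change (1%:~R : rat) with (1 : rat).
  case: Hf => [[_ ->]|[_ ->]]; rewrite ?natrS; have := D h; move=> Dh; apply/andP; split; lra.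
have Hnh : (h <= n)%N by lia.
change ((Posz h)%:~R : rat) with (h%:R : rat).
have Ee : (n - h + h = n)%N by lia.
move/(congr1 (fun x => x%:R : rat)): Ee; rewrite natrD => Ee.
move/(congr1 (fun x => x%:R : rat)); rewrite !natrD !D.
move=> HE. lra.
Qed.
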